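(* Let $\mathbb X,\mathbb Y,\mathbb X^\sharp,\mathbb Y^\sharp$ be sets, $c:\mathbb X\times\mathbb X^\sharp\to\overline{\mathbb R}$, $d:\mathbb Y\times\mathbb Y^\sharp\to\overline{\mathbb R}$ couplings, and $K:\mathbb X\times\mathbb Y\to\overline{\mathbb R}$, $f:\mathbb X\to\overline{\mathbb R}$, $g:\mathbb Y\to\overline{\mathbb R}$. For $(x^\sharp,y)\in\mathbb X^\sharp\times\mathbb Y$ define $$K_{x^\sharp}(y)=-\big(K(\cdot,y)\big)^{c}(x^\sharp)=\inf_{x\in\mathbb X}\big((-c(x,x^\sharp))\mathbin{\overset{\cdot}{+}} K(x,y)\big).$$ Suppose that for every $x^\sharp\in\mathbb X^\sharp$, $$\sup_{y\in\mathbb Y}\big((-K_{x^\sharp}(y))\mathbin{\underset{\cdot}{+}}(-g(y))\big)=\inf_{y^\sharp\in\mathbb Y^\sharp}\big(K_{x^\sharp}^{d}(y^\sharp)\mathbin{\overset{\cdot}{+}} g^{-d}(y^\sharp)\big).$$ Then: if $f(x)=\inf_{y\in\mathbb Y}\big(K(x,y)\mathbin{\overset{\cdot}{+}} g(y)\big)$ for all $x\in\mathbb X$, it follows that $f^{c}(x^\sharp)=\inf_{y^\sharp\in\mathbb Y^\sharp}\big(K^{c\mathbin{\underset{\cdot}{+}} d}(x^\sharp,y^\sharp)\mathbin{\overset{\cdot}{+}} g^{-d}(y^\sharp)\big)$ for all $x^\sharp\in\mathbb X^\sharp$.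
   Context: $\overline{\mathbb R}=[-\infty,+\infty]$. The Moreau lower addition $\mathbin{\underset{\cdot}{+}}$ is usual addition extended by $(+\infty)\mathbin{\underset{\cdot}{+}}(-\infty)=(-\infty)\mathbin{\underset{\cdot}{+}}(+\infty)=-\infty$; the Moreau upper addition $\mathbin{\overset{\cdot}{+}}$ is usual addition extended by $(+\infty)\mathbin{\overset{\cdot}{+}}(-\infty)=(-\infty)\mathbin{\overset{\cdot}{+}}(+\infty)=+\infty$. For $h:\mathbb X\to\overline{\mathbb R}$, $h^{c}(x^\sharp)=\sup_{x}\big(c(x,x^\sharp)\mathbin{\underset{\cdot}{+}}(-h(x))\big)$. For $k:\mathbb Y\to\overline{\mathbb R}$, $k^{d}(y^\sharp)=\sup_{y}\big(d(y,y^\sharp)\mathbin{\underset{\cdot}{+}}(-k(y))\big)$ and $k^{-d}(y^\sharp)=\sup_{y}\big((-d(y,y^\sharp))\mathbin{\underset{\cdot}{+}}(-k(y))\big)$. $K^{c\mathbin{\underset{\cdot}{+}} d}(x^\sharp,y^\sharp)=\sup_{x\in\mathbb X,y\in\mathbb Y}\big(c(x,x^\sharp)\mathbin{\underset{\cdot}{+}} d(y,y^\sharp)\mathbin{\underset{\cdot}{+}}(-K(x,y))\big)$. *)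

(* Defs.v *)
From HB Require Import structures.
From mathcomp Require Import all_boot all_order all_algebra.
From mathcomp Require Import all_classical all_reals all_analysis.
Set Implicit Arguments. Unset Strict Implicit. Unset Printing Implicit Defensive.
Import Order.TTheory GRing.Theory Num.Theory.
Local Open Scope classical_set_scope.
Local Open Scope ereal_scope.

(* Moreau lower addition: +oo (+.) -oo = -oo  (mathcomp's adde) *)
Definition lplus {R : realType} (a b : \bar R) : \bar R := adde a b.
(* Moreau upper addition: +oo (+^) -oo = +oo  (mathcomp's dual_adde) *)
Definition uplus {R : realType} (a b : \bar R) : \bar R := dual_adde a b.

Definition cconj {R : realType} {X Xs : Type} (c : X -> Xs -> \bar R)
  (h : X -> \bar R) (xs : Xs) : \bar R :=
  ereal_sup (range (fun x => lplus (c x xs) (- h x))).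

Definition negcconj {R : realType} {Y Ys : Type} (d : Y -> Ys -> \bar R)
  (k : Y -> \bar R) (ys : Ys) : \bar R :=
  ereal_sup (range (fun y => lplus (- d y ys) (- k y))).

Definition cdconj {R : realType} {X Y Xs Ys : Type} (c : X -> Xs -> \bar R)
  (d : Y -> Ys -> \bar R) (K : X -> Y -> \bar R) (xs : Xs) (ys : Ys) : \bar R :=
  ereal_sup (range (fun p : X * Y =>
    lplus (lplus (c p.1 xs) (d p.2 ys)) (- K p.1 p.2))).

Definition Ksharp {R : realType} {X Y Xs : Type} (c : X -> Xs -> \bar R)
  (K : X -> Y -> \bar R) (xs : Xs) (y : Y) : \bar R :=
  - cconj c (fun x => K x y) xs.

(* Main.v *)
Require Import Defs.
From HB Require Import structures.
From mathcomp Require Import all_boot all_order all_algebra.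
From mathcomp Require Import all_classical all_reals all_analysis.
Import Order.TTheory GRing.Theory Num.Theory.
Local Open Scope classical_set_scope.
Local Open Scope ereal_scope.

Section Aux.
Context {R : realType}.
Implicit Types a : \bar R.

Lemma esup_ext (I : Type) (h h' : I -> \bar R) :
  (forall i, h i = h' i) -> ereal_sup (range h) = ereal_sup (range h').
Proof. by move=> H; rewrite (funext H). Qed.

Lemma esup_addl (I : Type) a (h : I -> \bar R) :
  a + ereal_sup (range h) = ereal_sup (range (fun i => a + h i)).
Proof.
apply/Order.le_anti/andP; split; last first.
  by apply/ereal_supP => _ [i _ <-]; apply: leeD2l; apply: ereal_sup_ubound; exists i.
case: a => [r| |].
- rewrite -leeBrDl //; apply/ereal_supP => _ [i _ <-].
  by rewrite leeBrDl //; apply: ereal_sup_ubound; exists i.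
- have [->|] := eqVneq (ereal_sup (range h)) -oo; first by rewrite leNye.
  move=> hne; have : -oo < ereal_sup (range h) by rewrite ltNye.
  move/ereal_sup_gtP => [_ [i _ <-]] hi.
  rewrite addye // ereal_supy ?leey //; exists i => //.
  by rewrite addye // gt_eqF.
- by rewrite leNye.
Qed.

Lemma esup_swap (I J : Type) (h : I -> J -> \bar R) :
  ereal_sup (range (fun i => ereal_sup (range (fun j => h i j)))) =
  ereal_sup (range (fun j => ereal_sup (range (fun i => h i j)))).
Proof.
apply/Order.le_anti/andP; split.
- apply/ereal_supP => _ [i _ <-]; apply/ereal_supP => _ [j _ <-].
  apply: (le_trans (y := ereal_sup (range (fun i => h i j)))).
    by apply: ereal_sup_ubound; exists i.
  by apply: ereal_sup_ubound; exists j.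
- apply/ereal_supP => _ [j _ <-]; apply/ereal_supP => _ [i _ <-].
  apply: (le_trans (y := ereal_sup (range (fun j => h i j)))).
    by apply: ereal_sup_ubound; exists j.
  by apply: ereal_sup_ubound; exists i.
Qed.

Lemma esup_pair (I J : Type) (h : I -> J -> \bar R) :
  ereal_sup (range (fun j => ereal_sup (range (fun i => h i j)))) =
  ereal_sup (range (fun p : I * J => h p.1 p.2)).
Proof.
apply/Order.le_anti/andP; split.
- apply/ereal_supP => _ [j _ <-]; apply/ereal_supP => _ [i _ <-].
  by apply: ereal_sup_ubound; exists (i, j).
- apply/ereal_supP => _ [[i j] _ <-] /=.
  apply: (le_trans (y := ereal_sup (range (fun i => h i j)))).
    by apply: ereal_sup_ubound; exists i.
  by apply: ereal_sup_ubound; exists j.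
Qed.

Lemma neg_einf (I : Type) (h : I -> \bar R) :
  - ereal_inf (range h) = ereal_sup (range (fun i => - h i)).
Proof.
rewrite /ereal_inf oppeK; congr ereal_sup.
apply/seteqP; split => x /=.
- by case=> _ [i _ <-] <-; exists i.
- by case=> i _ <-; exists (h i) => //; exists i.
Qed.

Lemma lplusE a b : lplus a b = a + b. Proof. by []. Qed.

Lemma uplusE a b : uplus a b = - (- a + - b).
Proof. exact: DualAddTheoryNumDomain.dual_addeE. Qed.

End Aux.

Theorem corollary2 (R : realType) (X Y Xs Ys : Type)
  (c : X -> Xs -> \bar R) (d : Y -> Ys -> \bar R)
  (K : X -> Y -> \bar R) (f : X -> \bar R) (g : Y -> \bar R) :
  (forall xs : Xs,
     ereal_sup (range (fun y => lplus (- Ksharp c K xs y) (- g y))) =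
     ereal_inf (range (fun ys => uplus (cconj d (Ksharp c K xs) ys)
                                       (negcconj d g ys)))) ->
  (forall x : X, f x = ereal_inf (range (fun y => uplus (K x y) (g y)))) ->
  forall xs : Xs,
    cconj c f xs =
    ereal_inf (range (fun ys => uplus (cdconj c d K xs ys) (negcconj d g ys))).
Proof.
move=> H hf xs.
have CD : forall ys, cconj d (Ksharp c K xs) ys = cdconj c d K xs ys.
  move=> ys.
  rewrite /cconj /cdconj.
  rewrite (@esup_ext _ _ _ (fun y => ereal_sup (range (fun x =>
     d y ys + (c x xs + - K x y))))); last first.
    move=> y; rewrite /Ksharp /cconj lplusE oppeK esup_addl.
    by apply: esup_ext => x; rewrite lplusE.
  rewrite esup_pair; apply: esup_ext => -[x y] /=.
  by rewrite !lplusE addeCA addeA.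
have E1 : cconj c f xs =
  ereal_sup (range (fun y => lplus (- Ksharp c K xs y) (- g y))).
  rewrite /cconj.
  rewrite (@esup_ext _ _ _ (fun x => ereal_sup (range (fun y =>
     c x xs + (- K x y + - g y))))); last first.
    move=> x; rewrite lplusE hf neg_einf esup_addl; apply: esup_ext => y.
    by rewrite uplusE oppeK.
  rewrite esup_swap; apply: esup_ext => y.
  rewrite /Ksharp /cconj lplusE oppeK addeC esup_addl; apply: esup_ext => x.
  by rewrite lplusE addeA addeC.
rewrite E1 H.
have EQ : (fun ys => uplus (cconj d (Ksharp c K xs) ys) (negcconj d g ys)) =
  (fun ys => uplus (cdconj c d K xs ys) (negcconj d g ys)).
  by apply: funext => ys; rewrite CD.
by rewrite EQ.
Qed.
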